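(* Let $\vartheta_2,\vartheta_3,\vartheta_4,\eta$ be functions of $\tau$ (with $\vartheta_2\vartheta_3\vartheta_4\neq0$) satisfying $$\frac{d\vartheta_2}{d\tau}=\frac{i}{\pi}\Big\{\eta+\frac{\pi^2}{12}(\vartheta_3^4+\vartheta_4^4)\Big\}\vartheta_2,\quad \frac{d\vartheta_4}{d\tau}=\frac{i}{\pi}\Big\{\eta-\frac{\pi^2}{12}(\vartheta_2^4+\vartheta_3^4)\Big\}\vartheta_4,$$ $$\frac{d\vartheta_3}{d\tau}=\frac{i}{\pi}\Big\{\eta+\frac{\pi^2}{12}(\vartheta_2^4-\vartheta_4^4)\Big\}\vartheta_3,\quad \frac{d\eta}{d\tau}=\frac{i}{\pi}\Big\{2\eta^2-\frac{\pi^4}{12^2}(\vartheta_2^8+\vartheta_3^8+\vartheta_4^8)\Big\}.$$ Then the quantity $\mathfrak{A}^4$ defined by $(\mathfrak{A}^4-1)\vartheta_2^4\vartheta_3^4\vartheta_4^4=(\vartheta_3^4-\vartheta_2^4-\vartheta_4^4)^3$ is constant in $\tau$; i.e. this relation is an algebraic integral of the system. *)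

(* Defs.v *)
From mathcomp Require Import all_boot all_order all_algebra.
From mathcomp Require Import all_classical all_reals all_analysis.
From mathcomp Require Export complex.
Import Order.TTheory GRing.Theory Num.Theory.
Import numFieldNormedType.Exports.
Local Open Scope ring_scope.
Set Implicit Arguments.
Unset Strict Implicit.
Unset Printing Implicit Defensive.

(* The complex plane over a real type R, viewed as a normed module over
   itself (so that complex derivatives make sense). *)
Notation CC R := ((R[i])^o).

(* Main.v *)
Require Import Defs.
From mathcomp Require Import all_boot all_order all_algebra.
From mathcomp Require Import all_classical all_reals all_analysis.
From mathcomp Require Import complex.
From mathcomp Require Import ring lra.
Import Order.TTheory GRing.Theory Num.Theory.
Import numFieldNormedType.Exports.
Local Open Scope ring_scope.
Local Open Scope classical_set_scope.
Section S.
Variable R : realType.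
Local Notation nc := (@Normc.normc R).

Lemma normC_def (x : CC R) : `|x| = (nc x)%:C%C. Proof. by []. Qed.

Lemma pos_real (r : CC R) : 0 < r -> r = (complex.Re r)%:C%C /\ 0 < complex.Re r.
Proof.
rewrite ltcE => /andP[/eqP H1 H2]; split => //.
by case: r H1 H2 => a b /= -> .
Qed.

Lemma nc_real (h : R) : nc (h%:C%C) = `|h|.
Proof. by rewrite /Normc.normc /= expr0n /= addr0 sqrtr_sqr. Qed.

Lemma est (f : CC R -> CC R) (w0 : CC R) : is_derive w0 1 f 0 ->
  forall e : R, 0 < e -> exists2 d : R, 0 < d & forall w : CC R, w != 0 ->
   nc w < d -> nc (f (w + w0) - f w0) <= e * nc w.
Proof.
move=> [df dv] e e0.
have H : (fun h : CC R => h^-1 *: (f (h *: 1 + w0) - f w0)) @ 0^' --> 'D_1 f w0 := df.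
rewrite dv in H.
move/cvgr0Pnorm_le: H => /(_ (e%:C%C)).
have : (0 : CC R) < e%:C%C by rewrite ltcR.
move=> e0' /(_ e0').
rewrite near_withinE => /nbhs_ballP [r r0 Hr].
have [rE rp] := pos_real r r0.
exists (complex.Re r) => // w w0n wd.
have : ball (0 : CC R) r w.
  by rewrite -ball_normE /= sub0r normrN normC_def rE ltcR.
move=> /Hr /(_ w0n).
rewrite /GRing.scale /= mulr1 normrM normfV.
have nw : 0 < `|w| by rewrite normr_gt0.
rewrite ler_pdivrMl // !normC_def -rmorphM /= lecR.
by rewrite mulrC.
Qed.

Lemma Re_le (x : CC R) : `|complex.Re x| <= nc x.
Proof. by have := normc_ge_Re x; rewrite normC_def lecR. Qed.

Lemma ReB (x y : CC R) : complex.Re (x - y) = complex.Re x - complex.Re y.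
Proof. by case: x; case: y. Qed.

Lemma nc_ge0 (x : CC R) : 0 <= nc x.
Proof. by case: x => a b; exact: sqrtr_ge0. Qed.

Lemma ncM (x y : CC R) : nc (x * y) = nc x * nc y.
Proof. exact: Normc.normcM. Qed.

Lemma gder (f : CC R -> CC R) (z v c : CC R) (s0 : R) :
  is_derive (z + (s0%:C%C) * v) 1 f 0 ->
  is_derive s0 1 (fun s : R => complex.Re (c * f (z + s%:C%C * v))) 0.
Proof.
move=> fd.
set g := (fun s : R => _).
have Hc : (fun h : R => h^-1 *: (g (h *: 1 + s0) - g s0)) @ 0^' --> 0.
  apply/cvgr0Pnorm_le => e e0.
  have M0 : 0 < nc c * nc v + 1 by rewrite ltr_wpDl // mulr_ge0 // nc_ge0.
  have [d d0 Hd] := est _ _ fd (e / (nc c * nc v + 1)) (divr_gt0 e0 M0).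
  have dM0 : 0 < d / (nc v + 1) by rewrite divr_gt0 // ltr_wpDl // nc_ge0.
  near=> h.
  have hn0 : h != 0 by near: h; exact: nbhs_dnbhs_neq.
  have hd : `|h| < d / (nc v + 1) by near: h; exact: dnbhs0_lt.
  rewrite /g /GRing.scale /= mulr1.
  have -> : z + (h + s0)%:C%C * v = h%:C%C * v + (z + s0%:C%C * v).
    by rewrite rmorphD /=; ring.
  rewrite -ReB -mulrBr.
  have [->|vn0] := eqVneq v 0.
    by rewrite !mulr0 !addr0 add0r subrr mulr0 /= mulr0 normr0 ltW.
  have wn0 : h%:C%C * v != 0.
    by rewrite mulf_neq0 // (inj_eq (@complexI _)).
  have wd : nc (h%:C%C * v) < d.
    rewrite ncM nc_real.
    have v1 : nc v <= nc v + 1 by rewrite lerDl.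
    apply: (le_lt_trans (ler_wpM2l (normr_ge0 h) v1)).
    by rewrite -ltr_pdivlMr // ltr_wpDl // nc_ge0.
  have HX := Hd _ wn0 wd; rewrite ncM nc_real in HX.
  rewrite normrM normfV ler_pdivrMl ?normr_gt0 //.
  apply: (le_trans (Re_le _)); rewrite ncM.
  apply: (le_trans (ler_wpM2l (nc_ge0 c) HX)).
  have -> : nc c * (e / (nc c * nc v + 1) * (`|h| * nc v)) =
    (`|h| * e) * (nc c * nc v / (nc c * nc v + 1)) by ring.
  apply: ler_piMr; first by rewrite mulr_ge0 // ltW.
  by rewrite ler_pdivrMr // mul1r lerDl.
apply: DeriveDef; last exact: cvg_lim Hc.
by apply/cvg_ex; exists 0.
Unshelve. all: by end_near.
Qed.

Lemma seg (f : CC R -> CC R) (z v : CC R) :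
  (forall s : R, 0 <= s <= 1 -> is_derive (z + s%:C%C * v) 1 f 0) ->
  f (z + v) = f z.
Proof.
move=> H.
have key (c : CC R) : complex.Re (c * f (z + v)) = complex.Re (c * f z).
  set g := fun s : R => complex.Re (c * f (z + s%:C%C * v)).
  have := @MVT_segment R g (fun _ => 0) 0 1 ler01.
  case.
  - move=> x; rewrite in_itv /= => /andP[x0 x1].
    by apply: gder; apply: H; rewrite !ltW.
  - apply: continuous_in_subspaceT => x; rewrite inE /= in_itv /= => /andP[x0 x1].
    have [dg _] := gder _ _ _ c _ (H x (andb_true_intro (conj x0 x1))).
    exact/differentiable_continuous/derivable1_diffP.
  move=> x _; rewrite mul0r => /eqP; rewrite subr_eq0 => /eqP.
  by rewrite /g rmorph1 rmorph0 mul1r mul0r addr0.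
move: (key 1) (key (- 'i%C)); rewrite !mul1r.
case: (f (z + v)) => a1 a2; case: (f z) => b1 b2 /= -> .
move=> E; congr (_ +i* _)%C; lra.
Qed.

Lemma ltcR' (a b : R) : a < b -> (a%:C%C : CC R) < b%:C%C.
Proof. by rewrite ltcR. Qed.

Lemma nbhs_nc (x : CC R) (r : R) : 0 < r -> nbhs x (fun u => nc (u - x) < r).
Proof.
move=> r0; have r0c : (0 : CC R) < r%:C%C by rewrite ltcR.
apply/nbhs_ballP; exists r%:C%C => //.
move=> u; rewrite -ball_normE /= -opprB normrN normC_def; move=> H; by rewrite -ltcR.
Qed.

Lemma loc (D : set (CC R)) (F : CC R -> CC R) : open D ->
  (forall t, D t -> is_derive t 1 F 0) -> forall t, D t ->
  exists2 r : R, 0 < r & forall u, nc (u - t) < r -> D u /\ F u = F t.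
Proof.
move=> oD dF t Dt.
have := oD t Dt.
move/nbhs_ballP => [e e0 He].
have [eE ep] := pos_real e e0.
have Db : forall u, nc (u - t) < complex.Re e -> D u.
  move=> u ut; apply: He; rewrite -ball_normE /= -opprB normrN normC_def eE.
  exact: ltcR'.
exists (complex.Re e) => // u ut; split; first exact: Db.
have -> : u = t + (u - t) by rewrite addrC subrK.
apply: seg => s /andP[s0 s1]; apply: dF; apply: Db.
rewrite [t + _]addrC addrK ncM nc_real (ger0_norm s0).
apply: le_lt_trans ut; rewrite -[leRHS]mul1r.
by apply: ler_wpM2r => //; exact: nc_ge0.
Qed.

Lemma const_on (D : set (CC R)) (F : CC R -> CC R) : open D -> connected D ->
  (forall t, D t -> is_derive t 1 F 0) ->
  forall t0 t1, D t0 -> D t1 -> F t1 = F t0.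
Proof.
move=> oD cD dF t0 t1 D0 D1.
apply: contrapT => neq.
pose A := [set t | D t /\ F t = F t0].
pose B := [set t | D t /\ F t <> F t0].
move/connectedP: cD => /(_ (fun b => if b then B else A)); apply.
split.
- by case; [exists t1 | exists t0].
- apply/seteqP; split => [t Dt|t [[]|[]]//].
  by have [E|E] := eqVneq (F t) (F t0); [left|right]; split => //; apply/eqP.
- split.
  + apply/seteqP; split => // x [clx [Dx Fx]].
    have [r r0 Hr] := loc _ _ oD dF _ Dx.
    have [u [[_ Fu] /Hr [_ Fu']]] := clx _ (nbhs_nc x r r0).
    by apply: Fx; rewrite -Fu' Fu.
  + apply/seteqP; split => // x [[Dx Fx] clx].
    have [r r0 Hr] := loc _ _ oD dF _ Dx.
    have [u [[_ Fu] /Hr [_ Fu']]] := clx _ (nbhs_nc x r r0).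
    by apply: Fu; rewrite Fu' Fx.
Qed.

Lemma Fder (th2 th3 th4 eta : CC R -> CC R) (t : CC R) (d2 d3 d4 : CC R) :
  th2 t * th3 t * th4 t != 0 ->
  is_derive t 1 th2 d2 -> is_derive t 1 th3 d3 -> is_derive t 1 th4 d4 ->
  is_derive t 1 (fun y => (th3 y ^+ 4 - th2 y ^+ 4 - th4 y ^+ 4) ^+ 3 *
     (th2 y ^+ 4 * th3 y ^+ 4 * th4 y ^+ 4)^-1)
   ((3%:R * (th3 t ^+ 4 - th2 t ^+ 4 - th4 t ^+ 4) ^+ 2) *
      (4%:R * th3 t ^+ 3 * d3 - 4%:R * th2 t ^+ 3 * d2 - 4%:R * th4 t ^+ 3 * d4)
     * (th2 t ^+ 4 * th3 t ^+ 4 * th4 t ^+ 4)^-1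
    - (th3 t ^+ 4 - th2 t ^+ 4 - th4 t ^+ 4) ^+ 3 *
      (th2 t ^+ 4 * th3 t ^+ 4 * th4 t ^+ 4) ^- 2 *
      ((4%:R * th2 t ^+ 3 * d2) * th3 t ^+ 4 * th4 t ^+ 4
       + th2 t ^+ 4 * (4%:R * th3 t ^+ 3 * d3) * th4 t ^+ 4
       + th2 t ^+ 4 * th3 t ^+ 4 * (4%:R * th4 t ^+ 3 * d4))).
Proof.
move=> nz D2 D3 D4.
have E2 := is_deriveX 4 D2.
have E3 := is_deriveX 4 D3.
have E4 := is_deriveX 4 D4.
have EN := is_deriveX 3 (is_deriveB (is_deriveB E3 E2) E4).
have EP := is_deriveM (is_deriveM E2 E3) E4.
have Pt0' : th2 t ^+ 4 * th3 t ^+ 4 * th4 t ^+ 4 != 0.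
  by rewrite -!exprMn expf_neq0.
have Pt0 : (th2 ^+ 4 * th3 ^+ 4 * th4 ^+ 4) t != 0 := Pt0'.
have EV : is_derive t 1 (fun y => ((th2 ^+ 4 * th3 ^+ 4 * th4 ^+ 4) y)^-1)
   (- ((th2 ^+ 4 * th3 ^+ 4 * th4 ^+ 4) t) ^- 2 *: 
      ('D_1 (th2 ^+ 4 * th3 ^+ 4 * th4 ^+ 4) t)).
  apply: DeriveDef; first exact: derivableV Pt0 (@ex_derive _ _ _ _ _ _ _ EP).
  by rewrite deriveV // (@ex_derive _ _ _ _ _ _ _ EP).
rewrite derive_val in EV.
have EF := is_deriveM EN EV.
apply: (is_derive_eq EF).
rewrite /GRing.scale /= !(exprfctE, mulrfctE, opprfctE, addrfctE) /=.
field.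
by move: nz; rewrite !mulf_eq0 !negb_or => /andP[/andP[-> ->] ->].
Qed.
End S.

Theorem proposition7p3 (R : realType) (D : set (CC R))
  (th2 th3 th4 eta : CC R -> CC R)
  (hDopen : open D) (hDconn : connected D)
  (hnz : forall t, D t -> th2 t * th3 t * th4 t != 0)
  (h2 : forall t, D t -> is_derive t 1 th2
     ('i / (real_complex R pi) * (eta t + (real_complex R pi) ^+ 2 / 12%:R * (th3 t ^+ 4 + th4 t ^+ 4)) * th2 t))
  (h4 : forall t, D t -> is_derive t 1 th4
     ('i / (real_complex R pi) * (eta t - (real_complex R pi) ^+ 2 / 12%:R * (th2 t ^+ 4 + th3 t ^+ 4)) * th4 t))
  (h3 : forall t, D t -> is_derive t 1 th3
     ('i / (real_complex R pi) * (eta t + (real_complex R pi) ^+ 2 / 12%:R * (th2 t ^+ 4 - th4 t ^+ 4)) * th3 t))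
  (he : forall t, D t -> is_derive t 1 eta
     ('i / (real_complex R pi) * (2%:R * eta t ^+ 2
        - (real_complex R pi) ^+ 4 / (12%:R ^+ 2) * (th2 t ^+ 8 + th3 t ^+ 8 + th4 t ^+ 8)))) :
  exists A4 : CC R, forall t, D t ->
    (A4 - 1) * (th2 t ^+ 4 * th3 t ^+ 4 * th4 t ^+ 4)
      = (th3 t ^+ 4 - th2 t ^+ 4 - th4 t ^+ 4) ^+ 3.
Proof.
have pi0 : real_complex R pi != 0.
  by rewrite (inj_eq (@complexI _)) gt_eqF // pi_gt0.
pose F := fun y => (th3 y ^+ 4 - th2 y ^+ 4 - th4 y ^+ 4) ^+ 3 *
     (th2 y ^+ 4 * th3 y ^+ 4 * th4 y ^+ 4)^-1.
have dF : forall t, D t -> is_derive t 1 F 0.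
  move=> t Dt.
  apply: (is_derive_eq (@Fder R th2 th3 th4 eta t _ _ _ (hnz t Dt) (h2 t Dt) (h3 t Dt) (h4 t Dt))).
  have := hnz t Dt; rewrite !mulf_eq0 !negb_or => /andP[/andP[n2 n3] n4].
  move: (real_complex R pi) pi0 => p p0.
  field.
  by rewrite n2 n3 n4 p0.
case: (pselect (exists t, D t)) => [[t0 D0]|nD]; last first.
  by exists 0 => t Dt; exfalso; apply: nD; exists t.
exists (F t0 + 1) => t Dt.
have := hnz t Dt; rewrite !mulf_eq0 !negb_or => /andP[/andP[n2 n3] n4].
rewrite addrK -(@const_on R D F hDopen hDconn dF t0 t D0 Dt) /F.
field.
by rewrite n2 n3 n4.
Qed.
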